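(* The At-least-1 objective is strategyproof against a manipulator $m^+$ (one who can only add edges) over directed networks. That is, for every $k$, every directed social network $G$, every agent $m$ and every manipulation in which $m$ adds outgoing edges $(m,a)\notin E$ (yielding $G^m$), we have \[\min_{P\in O(G^m)} u(m,P)\le\min_{P\in O(G)} u(m,P)\quad\text{and}\quad \max_{P\in O(G^m)} u(m,P)\le\max_{P\in O(G)} u(m,P),\] where $O(\cdot)$ is the set of At-least-1 solutions, $u(m,P)$ is computed in the true network $G$, and both the minimum and maximum over an empty solution set are taken to be $0$.
   Context: Let $A=\{a_1,\dots,a_n\}$ be a finite nonempty set of agents and $G=\langle A,E\rangle$ a directed graph without self-loops (the social network); $N(a)=\{b:(a,b)\in E\}$. For a coalition $C\subseteq A$ with $a\in C$, $u(a,C)=|C\cap N(a)|$. For $0<k\le n$, $\Pi_k$ is the set of partitions of $A$ into exactly $k$ nonempty coalitions; for $P\in\Pi_k$, $u(a,P)=u(a,C)$ where $C\in P$ contains $a$. The At-least-1 objective: $O(G)$ is the set of all $P\in\Pi_k$ such that every agent has utility at least $1$ (utilities computed in the network in question); if no such $P$ exists the instance is infeasible, $O(G)=\emptyset$, and all agents are considered to have utility $0$. A manipulator $m$ of type $m^+$ in a directed network may add only outgoing edges $(m,a)\notin E$, so $N^m(a)=N(a)$ for all $a\ne m$ in the reported network $G^m$. The utility $u(m,P)$ of the manipulator is always computed with respect to his true neighbours in the original $G$. *)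

(* Defs.v *)
From mathcomp Require Import all_boot.
Set Implicit Arguments. Unset Strict Implicit. Unset Printing Implicit Defensive.

Section Coalitions.
Variable T : finType.

Definition no_self_loops (E : rel T) : Prop := forall a, ~~ E a a.

Definition nbhd (E : rel T) (a : T) : {set T} := [set b | E a b].

Definition util_coal (E : rel T) (a : T) (C : {set T}) : nat :=
  #|C :&: nbhd E a|.

Definition util (E : rel T) (a : T) (P : {set {set T}}) : nat :=
  util_coal E a (pblock P a).

Definition is_k_partition (k : nat) (P : {set {set T}}) : bool :=
  partition P [set: T] && (#|P| == k).

Definition atleast1 (E : rel T) (k : nat) : {set {set {set T}}} :=
  [set P | is_k_partition k P && [forall a, 1 <= util E a P]].

(* min / max of f over a set of partitions; both 0 on the empty set *)
Definition min_over (S : {set {set {set T}}}) (f : {set {set T}} -> nat) : nat :=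
  if [pick P in S] is Some P0 then \big[minn/f P0]_(P in S) f P else 0.

Definition max_over (S : {set {set {set T}}}) (f : {set {set T}} -> nat) : nat :=
  \max_(P in S) f P.

Definition plus_manipulation (E Em : rel T) (m : T) : Prop :=
  no_self_loops Em /\
  (forall a, a != m -> forall b, Em a b = E a b) /\
  (forall b, E m b -> Em m b).

End Coalitions.

(* Main.v *)
Require Import Defs.
From mathcomp Require Import all_boot.

Section S.
Variable T : finType.

Lemma bigmin_le (S : {set {set {set T}}}) (f : {set {set T}} -> nat) x0 P :
  P \in S -> \big[minn/x0]_(Q in S) f Q <= f P.
Proof.
move=> HP; rewrite -big_filter.
have : P \in [seq Q <- index_enum _ | Q \in S] by rewrite mem_filter HP mem_index_enum.
elim: [seq Q <- _ | _] => // a s IH; rewrite inE big_cons.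
case/orP => [/eqP ->|/IH H]; first exact: geq_minl.
exact: leq_trans (geq_minr _ _) H.
Qed.

Lemma le_bigmin (S : {set {set {set T}}}) (f : {set {set T}} -> nat) x0 c :
  c <= x0 -> (forall P, P \in S -> c <= f P) -> c <= \big[minn/x0]_(Q in S) f Q.
Proof.
move=> H0 H; apply: (big_ind (fun x => c <= x)) => //.
  by move=> x y Hx Hy; rewrite leq_min Hx Hy.
Qed.
End S.

Theorem theorem3 (T : finType) (k : nat) (E Em : rel T) (m : T) :
  0 < k -> k <= #|T| ->
  no_self_loops E ->
  plus_manipulation E Em m ->
  min_over (atleast1 Em k) (util E m) <= min_over (atleast1 E k) (util E m) /\
  max_over (atleast1 Em k) (util E m) <= max_over (atleast1 E k) (util E m).
Proof.
move=> _ _ _ [_ [Hoth Hm]].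
have sub a : nbhd E a \subset nbhd Em a.
  apply/subsetP => b; rewrite !inE.
  case: (eqVneq a m) => [->|ne]; first exact: Hm.
  by rewrite Hoth.
have key1 P : P \in atleast1 E k -> P \in atleast1 Em k.
  rewrite !inE => /andP [-> /forallP H] /=; apply/forallP => a.
  apply: leq_trans (H a) _; rewrite /util /util_coal.
  by apply: subset_leq_card; apply: setIS.
have key2 P : P \in atleast1 Em k -> P \notin atleast1 E k -> util E m P = 0.
  rewrite !inE => /andP [-> /forallP H] /=.
  case: (posnP (util E m P)) => // pos /negP []; apply/forallP => a.
  case: (eqVneq a m) => [->|ne] //.
  have := H a; rewrite /util /util_coal /nbhd.
  have -> : [set b | Em a b] = [set b | E a b] by apply/setP=> b; rewrite !inE Hoth.
  done.
split.
  rewrite /min_over.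
  case: (pickP [pred P | P \in atleast1 Em k]) => [Q0 HQ0|] //.
  case: (pickP [pred P | P \in atleast1 E k]) => [P0 HP0|HE].
    apply: le_bigmin; first exact: bigmin_le (key1 _ HP0).
    by move=> P HP; apply: bigmin_le; apply: key1.
  have Hn : Q0 \notin atleast1 E k by apply/negP => H; have := HE Q0; rewrite /= H.
  by rewrite -(key2 _ HQ0 Hn); apply: bigmin_le.
rewrite /max_over; apply/bigmax_leqP => P HP.
case HPE: (P \in atleast1 E k); first exact: leq_bigmax_cond.
by rewrite key2 // HPE.
Qed.
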